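(* Let $\Lambda$ be a finite, strongly connected $k$-graph, $y$ an $\mathbb{R}_+$-functor on $\Lambda$ and $\theta\in(0,\infty)$, such that condition (w-I) holds if $|\Lambda^0|=1$ and condition (w-II) holds otherwise. Define $d_{y,\theta}$ on $\Lambda^\infty\cong X_{\mathcal{B}_\Lambda}$ by $d_{y,\theta}(x,z)=1$ if $r(x)\ne r(z)$, $d_{y,\theta}(x,x)=0$, and $d_{y,\theta}(x,z)=w_{y,\theta}(x\wedge z)$ otherwise (equivalently $d_{y,\theta}(x,z)=\inf\{w_{y,\theta}(\lambda):\lambda\in F\mathcal{B}_\Lambda,\ x,z\in Z(\lambda)\}$ when $r(x)=r(z)$). Then $d_{y,\theta}$ is an ultrametric on $\Lambda^\infty$, and the topology it induces is the cylinder set topology.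
   Context: A $k$-graph is a countable small category $\Lambda$ with a degree functor $d:\Lambda\to\mathbb{N}^k$ satisfying unique factorization: if $d(\lambda)=m+n$ there are unique $\eta,\nu$ with $\lambda=\eta\nu$, $d(\eta)=m$, $d(\nu)=n$. $\Lambda^n=d^{-1}(n)$, $\Lambda^0$ = vertices, $r,s$ range/source, $v\Lambda^nw$ paths of degree $n$ from $w$ to $v$; $e_i$ standard basis; finite: each $\Lambda^n$ finite; strongly connected: $v\Lambda w\ne\emptyset$ for all vertices. An $\mathbb{R}_+$-functor is $y:\Lambda\to[0,\infty)$ with $y(v)=0$ on vertices and $y(\lambda\nu)=y(\lambda)+y(\nu)$ when $s(\lambda)=r(\nu)$. $B_i(y,\theta)_{v,w}=\sum_{\lambda\in v\Lambda^{e_i}w}e^{-\theta y(\lambda)}$; unique $\xi^{y,\theta}\in(0,\infty)^{\Lambda^0}$ with $\sum_v\xi^{y,\theta}_v=1$ and $B_i(y,\theta)\xi^{y,\theta}=\rho(B_i(y,\theta))\xi^{y,\theta}$ for all $i$ ($\rho$ = spectral radius); $\rho(B(y,\theta))^m=\prod_i\rho(B_i(y,\theta))^{m_i}$. Condition (w-I): $\rho(B_i(y,\theta))>1$ for all $i$. Condition (w-II): there is $i$ with $\rho(B_i(y,\theta))>\max_{v,w}B_i(y,\theta)_{v,w}$. Stationary $k$-Bratteli diagram $\mathcal{B}_\Lambda$: vertex sets $\mathcal{V}_n=\Lambda^0$; for $n\ge1$, $n\equiv i\pmod k$, $i\in\{1,\dots,k\}$, edge set $\mathcal{E}_n$ with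 one edge from $q\in\mathcal{V}_n$ to $p\in\mathcal{V}_{n-1}$ per $\lambda\in p\Lambda^{e_i}q$. Finite paths $f_1\cdots f_n$ ($f_j\in\mathcal{E}_j$, $s(f_j)=r(f_{j+1})$; length 0 = vertices of $\mathcal{V}_0$) form $F\mathcal{B}_\Lambda$ and are identified with morphisms $f_1\cdots f_n\in\Lambda$; infinite paths $f_1f_2\cdots$ form $X_{\mathcal{B}_\Lambda}$, with cylinder sets $Z(\lambda)$ (infinite paths with initial segment $\lambda$) generating the cylinder set topology; $r(x)=r(f_1)\in\mathcal{V}_0$. For $x\ne z$ with $r(x)=r(z)$, $x\wedge z$ is their longest common initial segment. $X_{\mathcal{B}_\Lambda}$ is naturally homeomorphic to the infinite path space $\Lambda^\infty$ (degree-preserving functors from $\Omega_k$ into $\Lambda$, topologized by cylinder sets), compatibly with cylinder sets. $w_{y,\theta}(\lambda)=e^{-y(\lambda)}\big(\rho(B(y,\theta))^{-d(\lambda)}\xi^{y,\theta}_{s(\lambda)}\big)^{1/\theta}$ for $\lambda\in F\mathcal{B}_\Lambda$. A metric $d$ is an ultrametric if $d(x,z)\le\max\{d(x,u),d(u,z)\}$ for all $x,z,u$. *)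

(* Defs.v *)
From Stdlib Require Import Reals List Arith Classical ClassicalEpsilon.
Import ListNotations.
Open Scope R_scope.


(* ---------- degrees: elements of N^k as nat -> nat supported on [0,k) ---------- *)
Definition supported (k : nat) (m : nat -> nat) : Prop := forall i, (k <= i)%nat -> m i = 0%nat.
Definition deg_eq (m n : nat -> nat) : Prop := forall i, m i = n i.
Definition deg_add (m n : nat -> nat) : nat -> nat := fun i => (m i + n i)%nat.
Definition deg_zero : nat -> nat := fun _ => 0%nat.
(* standard basis vector e_i (0-based colours i = 0, ..., k-1) *)
Definition e_ (i : nat) : nat -> nat := fun j => if Nat.eqb j i then 1%nat else 0%nat.

Record kgraph (k : nat) := {
  kg_obj : Type;
  kg_mor : Type;
  kg_r : kg_mor -> kg_obj;
  kg_s : kg_mor -> kg_obj;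
  kg_id : kg_obj -> kg_mor;
  (* kg_comp a b = the composite "a b" (meaningful when s a = r b) *)
  kg_comp : kg_mor -> kg_mor -> kg_mor;
  kg_d : kg_mor -> nat -> nat;
  kg_r_id : forall v, kg_r (kg_id v) = v;
  kg_s_id : forall v, kg_s (kg_id v) = v;
  kg_r_comp : forall a b, kg_s a = kg_r b -> kg_r (kg_comp a b) = kg_r a;
  kg_s_comp : forall a b, kg_s a = kg_r b -> kg_s (kg_comp a b) = kg_s b;
  kg_id_l : forall a, kg_comp (kg_id (kg_r a)) a = a;
  kg_id_r : forall a, kg_comp a (kg_id (kg_s a)) = a;
  kg_assoc : forall a b c, kg_s a = kg_r b -> kg_s b = kg_r c ->
      kg_comp a (kg_comp b c) = kg_comp (kg_comp a b) c;
  kg_d_supp : forall a, supported k (kg_d a);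
  kg_d_id : forall v, deg_eq (kg_d (kg_id v)) deg_zero;
  kg_d_comp : forall a b, kg_s a = kg_r b ->
      deg_eq (kg_d (kg_comp a b)) (deg_add (kg_d a) (kg_d b));
  kg_fact : forall (l : kg_mor) (m n : nat -> nat),
      supported k m -> supported k n -> deg_eq (kg_d l) (deg_add m n) ->
      exists e, (kg_s (fst e) = kg_r (snd e) /\ l = kg_comp (fst e) (snd e) /\
                 deg_eq (kg_d (fst e)) m /\ deg_eq (kg_d (snd e)) n) /\
        forall e', (kg_s (fst e') = kg_r (snd e') /\ l = kg_comp (fst e') (snd e') /\
                 deg_eq (kg_d (fst e')) m /\ deg_eq (kg_d (snd e')) n) -> e' = e
}.

Arguments kg_obj {k}. Arguments kg_mor {k}. Arguments kg_r {k}. Arguments kg_s {k}.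
Arguments kg_id {k}. Arguments kg_comp {k}. Arguments kg_d {k}.

(* A finite k-graph: every Lambda^n is finite, witnessed by an enumeration
   without repetitions (this also gives countability). *)
Record finite_kgraph (k : nat) := {
  fkg :> kgraph k;
  fkg_enum : (nat -> nat) -> list (kg_mor fkg);
  fkg_enum_nodup : forall n, NoDup (fkg_enum n);
  fkg_enum_spec : forall n l, In l (fkg_enum n) <-> deg_eq (kg_d fkg l) n
}.
Arguments fkg {k}. Arguments fkg_enum {k}.

Definition strongly_connected {k} (G : kgraph k) : Prop :=
  forall v w : kg_obj G, exists l, kg_r G l = v /\ kg_s G l = w.

Definition num_vertices {k} (G : finite_kgraph k) : nat := length (fkg_enum G deg_zero).
Definition verts {k} (G : finite_kgraph k) : list (kg_obj G) :=
  map (kg_r G) (fkg_enum G deg_zero).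

Definition Rplus_functor {k} (G : kgraph k) (y : kg_mor G -> R) : Prop :=
  (forall l, 0 <= y l) /\ (forall v, y (kg_id G v) = 0) /\
  (forall a b, kg_s G a = kg_r G b -> y (kg_comp G a b) = y a + y b).

Definition lsum {A} (f : A -> R) (l : list A) : R := fold_right (fun a acc => f a + acc) 0 l.

Definition ind (P : Prop) : R := if excluded_middle_informative P then 1 else 0.

Definition Bmat {k} (G : finite_kgraph k) (y : kg_mor G -> R) (theta : R) (i : nat)
  (v w : kg_obj G) : R :=
  lsum (fun l => ind (kg_r G l = v /\ kg_s G l = w) * exp (- theta * y l)) (fkg_enum G (e_ i)).

Definition mat_vec {k} (G : finite_kgraph k) (B : kg_obj G -> kg_obj G -> R)
  (u : kg_obj G -> R) (p : kg_obj G) : R := lsum (fun q => B p q * u q) (verts G).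

(* a + b i is a (complex) eigenvalue of the real matrix B:
   B (u + i v) = (a + b i)(u + i v) for some nonzero complex vector u + i v *)
Definition complex_eigenvalue {k} (G : finite_kgraph k) (B : kg_obj G -> kg_obj G -> R)
  (a b : R) : Prop :=
  exists u v : kg_obj G -> R,
    (exists q, u q <> 0 \/ v q <> 0) /\
    (forall p, mat_vec G B u p = a * u p - b * v p) /\
    (forall p, mat_vec G B v p = b * u p + a * v p).

Definition is_spectral_radius {k} (G : finite_kgraph k) (B : kg_obj G -> kg_obj G -> R)
  (rho : R) : Prop :=
  is_lub (fun t => exists a b, complex_eigenvalue G B a b /\ t = sqrt (a ^ 2 + b ^ 2)) rho.

(* An infinite path f_1 f_2 ... is stored 0-based: x j = f_{j+1} in E_{j+1},
   which corresponds to a morphism of degree e_i with i = j mod k (0-based colour). *)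
Definition is_inf_path {k} (G : kgraph k) (x : nat -> kg_mor G) : Prop :=
  forall j, deg_eq (kg_d G (x j)) (e_ (j mod k)) /\ kg_s G (x j) = kg_r G (x (S j)).

Definition InfPath {k} (G : kgraph k) := { x : nat -> kg_mor G | is_inf_path G x }.

Definition path_r {k} {G : kgraph k} (x : InfPath G) : kg_obj G := kg_r G (proj1_sig x 0%nat).

(* the finite path f_1 ... f_n, identified with the morphism f_1 f_2 ... f_n of Lambda;
   for n = 0 it is the vertex r(x) *)
Fixpoint prefix {k} (G : kgraph k) (x : nat -> kg_mor G) (n : nat) : kg_mor G :=
  match n with
  | O => kg_id G (kg_r G (x 0%nat))
  | S n' => kg_comp G (prefix G x n') (x n')
  end.

Fixpoint rho_pow_neg (rho : nat -> R) (m : nat -> nat) (k : nat) : R :=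
  match k with
  | O => 1
  | S k' => rho_pow_neg rho m k' * / (rho k' ^ m k')
  end.

Definition wyt {k} (G : kgraph k) (y : kg_mor G -> R) (theta : R) (rho : nat -> R)
  (xi : kg_obj G -> R) (l : kg_mor G) : R :=
  exp (- y l) * Rpower (rho_pow_neg rho (kg_d G l) k * xi (kg_s G l)) (/ theta).

Definition meet_len {k} {G : kgraph k} (x z : InfPath G) : nat :=
  epsilon (inhabits 0%nat)
    (fun n => (forall j, (j < n)%nat -> proj1_sig x j = proj1_sig z j) /\
              proj1_sig x n <> proj1_sig z n).

Definition dyt {k} (G : kgraph k) (y : kg_mor G -> R) (theta : R) (rho : nat -> R)
  (xi : kg_obj G -> R) (x z : InfPath G) : R :=
  if excluded_middle_informative (path_r x = path_r z) then
    if excluded_middle_informative (x = z) then 0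
    else wyt G y theta rho xi (prefix G (proj1_sig x) (meet_len x z))
  else 1.

Definition is_ultrametric {X : Type} (d : X -> X -> R) : Prop :=
  (forall x z, 0 <= d x z) /\
  (forall x z, d x z = 0 <-> x = z) /\
  (forall x z, d x z = d z x) /\
  (forall x z u, d x z <= Rmax (d x u) (d u z)).

Definition metric_open {X : Type} (d : X -> X -> R) (U : X -> Prop) : Prop :=
  forall x, U x -> exists eps, 0 < eps /\ forall z, d x z < eps -> U z.

(* finite paths of B_Lambda: a vertex v of V_0 together with edges f_1 ... f_n *)
Definition FinPath {k} (G : kgraph k) : Type := (kg_obj G * list (kg_mor G))%type.

Definition is_fin_path {k} (G : kgraph k) (p : FinPath G) : Prop :=
  (forall j f, nth_error (snd p) j = Some f -> deg_eq (kg_d G f) (e_ (j mod k))) /\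
  (forall f, nth_error (snd p) 0 = Some f -> kg_r G f = fst p) /\
  (forall j f g, nth_error (snd p) j = Some f -> nth_error (snd p) (S j) = Some g ->
     kg_s G f = kg_r G g).

Definition cylinder {k} {G : kgraph k} (p : FinPath G) (x : InfPath G) : Prop :=
  path_r x = fst p /\
  forall j, (j < length (snd p))%nat -> nth_error (snd p) j = Some (proj1_sig x j).

(* open sets of the topology generated by the cylinder sets (as subbasis) *)
Definition cylinder_open {k} {G : kgraph k} (U : InfPath G -> Prop) : Prop :=
  forall x, U x -> exists ps : list (FinPath G),
    Forall (fun p => is_fin_path G p /\ cylinder p x) ps /\
    forall z, Forall (fun p => cylinder p z) ps -> U z.

(* Main.v *)
Require Import Defs.
From Stdlib Require Import Reals List Arith Lia Lra Classical ClassicalEpsilon ProofIrrelevance FunctionalExtensionality.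
Import ListNotations.
Open Scope R_scope.

Lemma deg0_id {k} (G : kgraph k) (l : kg_mor G) :
  deg_eq (kg_d G l) deg_zero -> l = kg_id G (kg_r G l).
Proof.
  intros H.
  assert (Hs0 : supported k deg_zero) by (intros i _; reflexivity).
  destruct (kg_fact k G l deg_zero deg_zero Hs0 Hs0) as [e [He Hu]].
  { intros i. rewrite H. reflexivity. }
  assert (E1 : (l, kg_id G (kg_s G l)) = e).
  { apply Hu. simpl. split; [rewrite kg_r_id; reflexivity|].
    split; [rewrite kg_id_r; reflexivity|]. split; [exact H| apply kg_d_id]. }
  assert (E2 : (kg_id G (kg_r G l), l) = e).
  { apply Hu. simpl. split; [rewrite kg_s_id; reflexivity|].
    split; [rewrite kg_id_l; reflexivity|]. split; [apply kg_d_id| exact H]. }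
  rewrite <- E2 in E1. injection E1. auto.
Qed.

Lemma prefix_s {k} (G : kgraph k) x (hx : is_inf_path G x) n :
  kg_s G (prefix G x n) = kg_r G (x n).
Proof.
  induction n as [|n IH]; simpl.
  - apply kg_s_id.
  - rewrite kg_s_comp by exact IH. apply (proj2 (hx n)).
Qed.

Lemma prefix_r {k} (G : kgraph k) x (hx : is_inf_path G x) n :
  kg_r G (prefix G x n) = kg_r G (x 0%nat).
Proof.
  induction n as [|n IH]; simpl.
  - apply kg_r_id.
  - rewrite kg_r_comp by (apply prefix_s; exact hx). exact IH.
Qed.

Lemma prefix_ext {k} (G : kgraph k) x z n :
  (forall j, (j < n)%nat -> x j = z j) -> kg_r G (x 0%nat) = kg_r G (z 0%nat) ->
  prefix G x n = prefix G z n.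
Proof.
  intros H Hr. induction n as [|n IH]; simpl.
  - rewrite Hr; reflexivity.
  - rewrite IH by (intros; apply H; lia). rewrite H by lia. reflexivity.
Qed.

Lemma prefix_deg {k} (G : kgraph k) x (hx : is_inf_path G x) (hk : (1 <= k)%nat) N :
  forall r, (r <= k)%nat -> forall j, (j < k)%nat ->
  kg_d G (prefix G x (N * k + r)) j = (N + if Nat.ltb j r then 1 else 0)%nat.
Proof.
  induction N as [|N IHN]; intros r.
  - induction r as [|r IHr]; intros Hr j Hj.
    + simpl. rewrite kg_d_id. reflexivity.
    + replace (0 * k + S r)%nat with (S r) by lia. simpl prefix.
      rewrite kg_d_comp by (apply prefix_s; exact hx). unfold deg_add.
      replace r with (0*k+r)%nat at 1 by lia.
      rewrite IHr by lia. rewrite (proj1 (hx _)).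
      assert (Hm: (r mod k = r)%nat) by (rewrite Nat.mod_small; lia). rewrite Hm.
      unfold e_. destruct (Nat.eqb_spec j r); destruct (Nat.ltb_spec j r);
        destruct (Nat.ltb_spec j (S r)); lia.
  - induction r as [|r IHr]; intros Hr j Hj.
    + replace (S N * k + 0)%nat with (N * k + k)%nat by lia.
      rewrite IHN by lia. destruct (Nat.ltb_spec j k); simpl; lia.
    + assert (Hm: ((S N * k + r) mod k = r)%nat).
      { replace (S N * k + r)%nat with (r + S N * k)%nat by lia.
        rewrite Nat.Div0.mod_add. rewrite Nat.mod_small; lia. }
      replace (S N * k + S r)%nat with (S (S N*k + r)) by lia.
      remember (S N * k + r)%nat as q eqn:Hq.
      simpl prefix.
      rewrite kg_d_comp by (apply prefix_s; exact hx). unfold deg_add.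
      pose proof (IHr ltac:(lia) j Hj) as I. rewrite I, (proj1 (hx _)).
      rewrite Hm.
      unfold e_. destruct (Nat.eqb_spec j r); destruct (Nat.ltb_spec j r);
        destruct (Nat.ltb_spec j (S r)); lia.
Qed.

Lemma rpn_ext rho m n k' : (forall j, (j < k')%nat -> m j = n j) ->
  rho_pow_neg rho m k' = rho_pow_neg rho n k'.
Proof.
  induction k' as [|k' IH]; intros H; simpl; [reflexivity|].
  rewrite IH by (intros; apply H; lia). rewrite H by lia. reflexivity.
Qed.

Lemma rpn_zero rho k' : rho_pow_neg rho deg_zero k' = 1.
Proof.
  induction k' as [|k' IH]; simpl; [reflexivity|]. rewrite IH. unfold deg_zero. simpl.
  rewrite Rinv_1. ring.
Qed.

Lemma rpn_add rho m n k' : (forall j, (j < k')%nat -> rho j <> 0) ->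
  rho_pow_neg rho (deg_add m n) k' = rho_pow_neg rho m k' * rho_pow_neg rho n k'.
Proof.
  induction k' as [|k' IH]; intros H; simpl; [ring|].
  rewrite IH by (intros; apply H; lia). unfold deg_add. rewrite pow_add.
  assert (rho k' <> 0) by (apply H; lia).
  rewrite Rinv_mult. ring.
Qed.

Lemma rpn_pos rho m k' : (forall j, (j < k')%nat -> 0 < rho j) ->
  0 < rho_pow_neg rho m k'.
Proof.
  induction k' as [|k' IH]; intros H; simpl; [lra|].
  apply Rmult_lt_0_compat; [apply IH; intros; apply H; lia|].
  apply Rinv_0_lt_compat, pow_lt, H; lia.
Qed.

Lemma rpn_e rho i k' : (i < k')%nat -> rho i <> 0 ->
  rho_pow_neg rho (e_ i) k' = / rho i.
Proof.
  induction k' as [|k' IH]; intros Hi Hr; [lia|]. simpl.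
  destruct (Nat.eq_dec i k') as [->|Hne].
  - rewrite (rpn_ext rho (e_ k') deg_zero).
    + rewrite rpn_zero. unfold e_. rewrite Nat.eqb_refl. simpl. rewrite Rmult_1_r. ring.
    + intros j Hj. unfold e_, deg_zero. destruct (Nat.eqb_spec j k'); simpl; lia.
  - rewrite IH by (lia || exact Hr). unfold e_. destruct (Nat.eqb_spec k' i); [lia|]. simpl.
    rewrite Rinv_1. ring.
Qed.

Fixpoint tsum (m : nat -> nat) (k' : nat) : nat :=
  match k' with O => O | S k'' => (tsum m k'' + m k'')%nat end.

Lemma tsum_ext m n k' : (forall j, (j < k')%nat -> m j = n j) -> tsum m k' = tsum n k'.
Proof.
  induction k' as [|k' IH]; intros H; simpl; [reflexivity|].
  rewrite IH by (intros; apply H; lia). rewrite H by lia. reflexivity.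
Qed.

Lemma tsum_add m n k' : tsum (deg_add m n) k' = (tsum m k' + tsum n k')%nat.
Proof. induction k' as [|k' IH]; simpl; [reflexivity|]. rewrite IH. unfold deg_add. lia. Qed.

Lemma tsum_e i k' : (i < k')%nat -> tsum (e_ i) k' = 1%nat.
Proof.
  induction k' as [|k' IH]; intros Hi; simpl; [lia|].
  destruct (Nat.eq_dec i k') as [->|Hne].
  - rewrite (tsum_ext (e_ k') (fun _ => 0%nat)).
    + assert (forall q, tsum (fun _ => 0%nat) q = 0%nat) as Z.
      { induction q; simpl; lia. }
      rewrite Z. unfold e_. rewrite Nat.eqb_refl. lia.
    + intros j Hj. unfold e_. destruct (Nat.eqb_spec j k'); lia.
  - rewrite IH by lia. unfold e_. destruct (Nat.eqb_spec k' i); lia.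
Qed.

Lemma tsum_pos m k' : (0 < tsum m k')%nat -> exists j, (j < k')%nat /\ (0 < m j)%nat.
Proof.
  induction k' as [|k' IH]; simpl; intros H; [lia|].
  destruct (Nat.eq_dec (m k') 0) as [E|E].
  - destruct IH as [j [Hj1 Hj2]]; [lia|]. exists j; split; lia.
  - exists k'; split; lia.
Qed.

Lemma tsum_zero m k' : tsum m k' = 0%nat -> forall j, (j < k')%nat -> m j = 0%nat.
Proof.
  induction k' as [|k' IH]; simpl; intros H j Hj; [lia|].
  destruct (Nat.eq_dec j k') as [->|]; [lia|]. apply IH; lia.
Qed.

Lemma exp_le x y : x <= y -> exp x <= exp y.
Proof.
  intros H. destruct (Rle_lt_or_eq_dec _ _ H) as [H1|H1].
  - left; apply exp_increasing; exact H1.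
  - rewrite H1; right; reflexivity.
Qed.

Definition Ef {k} (G : kgraph k) (y : kg_mor G -> R) theta rho (l : kg_mor G) : R :=
  exp (- theta * y l) * rho_pow_neg rho (kg_d G l) k.
Definition Wf {k} (G : kgraph k) (y : kg_mor G -> R) theta rho (xi : kg_obj G -> R) (l : kg_mor G) : R :=
  Ef G y theta rho l * xi (kg_s G l).

Lemma E_comp {k} (G : kgraph k) y theta rho (hy : Rplus_functor G y)
  (hr : forall j, (j < k)%nat -> 0 < rho j) a b :
  kg_s G a = kg_r G b -> Ef G y theta rho (kg_comp G a b) = Ef G y theta rho a * Ef G y theta rho b.
Proof.
  intros H. unfold Ef. destruct hy as [_ [_ hya]]. rewrite hya by exact H.
  rewrite (rpn_ext rho _ (deg_add (kg_d G a) (kg_d G b))) by (intros; apply kg_d_comp; exact H).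
  rewrite rpn_add by (intros j Hj; specialize (hr j Hj); lra).
  replace (- theta * (y a + y b)) with (- theta * y a + - theta * y b) by ring.
  rewrite exp_plus. ring.
Qed.

Lemma E_pos {k} (G : kgraph k) y theta rho (hr : forall j, (j < k)%nat -> 0 < rho j) l :
  0 < Ef G y theta rho l.
Proof. unfold Ef. apply Rmult_lt_0_compat; [apply exp_pos|apply rpn_pos; exact hr]. Qed.

Lemma exp_y_le1 {k} (G : kgraph k) y theta (hy : Rplus_functor G y) (ht : 0 < theta) l :
  exp (- theta * y l) <= 1.
Proof.
  rewrite <- exp_0. apply exp_le. destruct hy as [h0 _]. specialize (h0 l). nra.
Qed.

Lemma wyt_W {k} (G : kgraph k) y theta rho xi (ht : 0 < theta)
  (hr : forall j, (j < k)%nat -> 0 < rho j) (hxi : forall v, 0 < xi v) l :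
  wyt G y theta rho xi l = Rpower (Wf G y theta rho xi l) (/ theta).
Proof.
  unfold wyt, Wf, Ef. rewrite Rmult_assoc.
  rewrite <- (Rpower_mult_distr (exp (- theta * y l))).
  - f_equal. unfold Rpower. rewrite ln_exp. f_equal. field. lra.
  - apply exp_pos.
  - apply Rmult_lt_0_compat; [apply rpn_pos; exact hr|apply hxi].
Qed.

Lemma Rpower_pos a c : 0 < Rpower a c.
Proof. unfold Rpower. apply exp_pos. Qed.

Lemma lsum_nonneg {A} (f : A -> R) l : (forall a, In a l -> 0 <= f a) -> 0 <= lsum f l.
Proof.
  induction l as [|b l IH]; intros H; simpl; [lra|].
  assert (0 <= f b) by (apply H; left; reflexivity).
  assert (0 <= lsum f l) by (apply IH; intros; apply H; right; assumption). lra.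
Qed.

Lemma lsum_ge {A} (f : A -> R) l a : (forall a, In a l -> 0 <= f a) -> In a l -> f a <= lsum f l.
Proof.
  induction l as [|b l IH]; intros H Ha; simpl; [destruct Ha|].
  destruct Ha as [->|Ha].
  - assert (0 <= lsum f l) by (apply lsum_nonneg; intros; apply H; right; assumption). lra.
  - assert (0 <= f b) by (apply H; left; reflexivity).
    assert (f a <= lsum f l) by (apply IH; [intros; apply H; right; assumption|exact Ha]). lra.
Qed.

Lemma in_verts {k} (G : finite_kgraph k) v : In v (verts G).
Proof.
  unfold verts. apply in_map_iff. exists (kg_id G v). split; [apply kg_r_id|].
  apply fkg_enum_spec. apply kg_d_id.
Qed.

Lemma xi_le1 {k} (G : finite_kgraph k) (xi : kg_obj G -> R) (hxi : forall v, 0 < xi v)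
  (hs : lsum xi (verts G) = 1) v : xi v <= 1.
Proof. rewrite <- hs. apply lsum_ge; [intros; left; apply hxi|apply in_verts]. Qed.

Lemma ind_nonneg P : 0 <= Defs.ind P.
Proof. unfold Defs.ind. destruct (excluded_middle_informative P); lra. Qed.

Lemma Bmat_nonneg {k} (G : finite_kgraph k) y theta i v w : 0 <= Bmat G y theta i v w.
Proof.
  unfold Bmat. apply lsum_nonneg. intros. apply Rmult_le_pos; [apply ind_nonneg|left; apply exp_pos].
Qed.

Lemma edge_B {k} (G : finite_kgraph k) y theta j (e : kg_mor G) :
  deg_eq (kg_d G e) (e_ j) -> exp (- theta * y e) <= Bmat G y theta j (kg_r G e) (kg_s G e).
Proof.
  intros He. unfold Bmat.
  replace (exp (- theta * y e)) with
    (Defs.ind (kg_r G e = kg_r G e /\ kg_s G e = kg_s G e) * exp (- theta * y e)).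
  - apply (lsum_ge (fun l => Defs.ind (kg_r G l = kg_r G e /\ kg_s G l = kg_s G e) * exp (- theta * y l))).
    + intros. apply Rmult_le_pos; [apply ind_nonneg|left; apply exp_pos].
    + apply fkg_enum_spec. exact He.
  - unfold Defs.ind. destruct (excluded_middle_informative _) as [_|n]; [ring|].
    exfalso; apply n; split; reflexivity.
Qed.

Lemma edge_key {k} (G : finite_kgraph k) y theta rho xi (hxi : forall v, 0 < xi v) j
  (heig : forall v, mat_vec G (Bmat G y theta j) xi v = rho j * xi v) (e : kg_mor G) :
  deg_eq (kg_d G e) (e_ j) -> exp (- theta * y e) * xi (kg_s G e) <= rho j * xi (kg_r G e).
Proof.
  intros He. rewrite <- heig. unfold mat_vec.
  apply Rle_trans with (Bmat G y theta j (kg_r G e) (kg_s G e) * xi (kg_s G e)).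
  - apply Rmult_le_compat_r; [left; apply hxi|apply edge_B; exact He].
  - apply (lsum_ge (fun q => Bmat G y theta j (kg_r G e) q * xi q)).
    + intros. apply Rmult_le_pos; [apply Bmat_nonneg|left; apply hxi].
    + apply in_verts.
Qed.

Lemma rho_pos_edge {k} (G : finite_kgraph k) y theta rho xi (hxi : forall v, 0 < xi v) j
  (heig : forall v, mat_vec G (Bmat G y theta j) xi v = rho j * xi v) (e : kg_mor G) :
  deg_eq (kg_d G e) (e_ j) -> 0 < rho j.
Proof.
  intros He. pose proof (edge_key G y theta rho xi hxi j heig e He) as H.
  pose proof (exp_pos (- theta * y e)). pose proof (hxi (kg_s G e)). pose proof (hxi (kg_r G e)).
  assert (0 < rho j * xi (kg_r G e)) by nra. nra.
Qed.

Lemma W_edge {k} (G : finite_kgraph k) y theta rho xi (hxi : forall v, 0 < xi v)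
  (hr : forall j, (j < k)%nat -> 0 < rho j) j (hj : (j < k)%nat)
  (heig : forall v, mat_vec G (Bmat G y theta j) xi v = rho j * xi v) (e : kg_mor G) :
  deg_eq (kg_d G e) (e_ j) -> Wf G y theta rho xi e <= xi (kg_r G e).
Proof.
  intros He. unfold Wf, Ef.
  rewrite (rpn_ext rho _ (e_ j)) by (intros; apply He).
  pose proof (hr j hj). rewrite rpn_e by (auto; lra).
  pose proof (edge_key G y theta rho xi hxi j heig e He).
  apply Rmult_le_reg_l with (rho j); [lra|].
  replace (rho j * (exp (- theta * y e) * / rho j * xi (kg_s G e))) with
    (exp (- theta * y e) * xi (kg_s G e)) by (field; lra). exact H0.
Qed.

Lemma W_le_xi {k} (G : finite_kgraph k) y theta rho xi (hy : Rplus_functor G y) (ht : 0 < theta)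
  (hr : forall j, (j < k)%nat -> 0 < rho j) (hxi : forall v, 0 < xi v)
  (heig : forall j, (j < k)%nat -> forall v, mat_vec G (Bmat G y theta j) xi v = rho j * xi v) :
  forall nu, Wf G y theta rho xi nu <= xi (kg_r G nu).
Proof.
  intros nu. remember (tsum (kg_d G nu) k) as n eqn:Hn. revert nu Hn.
  induction n as [|n IH]; intros nu Hn.
  - assert (Hd : deg_eq (kg_d G nu) deg_zero).
    { intros t. destruct (lt_dec t k) as [Ht|Ht].
      - apply (tsum_zero _ k); [symmetry; exact Hn|exact Ht].
      - apply (kg_d_supp k G nu). lia. }
    pose proof (deg0_id G nu Hd) as Hid.
    pose proof (kg_s_id k G (kg_r G nu)) as Hs. rewrite <- Hid in Hs.
    unfold Wf, Ef. rewrite Hs.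
    rewrite (rpn_ext rho _ deg_zero) by (intros; apply Hd). rewrite rpn_zero.
    pose proof (exp_y_le1 G y theta hy ht nu). pose proof (hxi (kg_r G nu)). nra.
  - destruct (tsum_pos (kg_d G nu) k) as [j [Hj Hdj]]; [lia|].
    assert (Hs1 : supported k (e_ j)).
    { intros t Ht. unfold e_. destruct (Nat.eqb_spec t j); lia. }
    assert (Hs2 : supported k (fun t => (kg_d G nu t - e_ j t)%nat)).
    { intros t Ht. rewrite (kg_d_supp k G nu t Ht). reflexivity. }
    destruct (kg_fact k G nu (e_ j) (fun t => (kg_d G nu t - e_ j t)%nat) Hs1 Hs2)
      as [[e nu'] [[Hc [Heq [Hd1 Hd2]]] _]].
    { intros t. unfold deg_add, e_. destruct (Nat.eqb_spec t j); subst; lia. }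
    simpl in Hc, Heq, Hd1, Hd2. subst nu.
    assert (Ht : tsum (kg_d G nu') k = n).
    { rewrite (tsum_ext _ (deg_add (kg_d G e) (kg_d G nu'))) in Hn
        by (intros; apply kg_d_comp; exact Hc).
      rewrite tsum_add in Hn. rewrite (tsum_ext _ (e_ j)) in Hn by (intros; apply Hd1).
      rewrite tsum_e in Hn by exact Hj. lia. }
    specialize (IH nu' (eq_sym Ht)).
    unfold Wf in *. rewrite E_comp by assumption. rewrite kg_s_comp by exact Hc.
    rewrite kg_r_comp by exact Hc.
    pose proof (W_edge G y theta rho xi hxi hr j Hj (heig j Hj) e Hd1) as He.
    unfold Wf in He. pose proof (E_pos G y theta rho hr e).
    rewrite <- Hc in IH.
    apply Rle_trans with (Ef G y theta rho e * xi (kg_s G e)); [|exact He].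
    rewrite Rmult_assoc. apply Rmult_le_compat_l; [lra|exact IH].
Qed.

Lemma W_step {k} (G : finite_kgraph k) y theta rho xi (hy : Rplus_functor G y) (ht : 0 < theta)
  (hr : forall j, (j < k)%nat -> 0 < rho j) (hxi : forall v, 0 < xi v)
  (heig : forall j, (j < k)%nat -> forall v, mat_vec G (Bmat G y theta j) xi v = rho j * xi v)
  x (hx : is_inf_path G x) n :
  Wf G y theta rho xi (prefix G x (S n)) <= Wf G y theta rho xi (prefix G x n).
Proof.
  simpl prefix. pose proof (prefix_s G x hx n) as Hs.
  unfold Wf. rewrite E_comp by assumption. rewrite kg_s_comp by exact Hs.
  pose proof (W_le_xi G y theta rho xi hy ht hr hxi heig (x n)) as H. unfold Wf in H.
  rewrite Hs. pose proof (E_pos G y theta rho hr (prefix G x n)).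
  rewrite Rmult_assoc. apply Rmult_le_compat_l; [lra|exact H].
Qed.

Lemma W_mono {k} (G : finite_kgraph k) y theta rho xi (hy : Rplus_functor G y) (ht : 0 < theta)
  (hr : forall j, (j < k)%nat -> 0 < rho j) (hxi : forall v, 0 < xi v)
  (heig : forall j, (j < k)%nat -> forall v, mat_vec G (Bmat G y theta j) xi v = rho j * xi v)
  x (hx : is_inf_path G x) n m : (n <= m)%nat ->
  Wf G y theta rho xi (prefix G x m) <= Wf G y theta rho xi (prefix G x n).
Proof.
  induction m as [|m IH]; intros H.
  - replace n with 0%nat by lia. lra.
  - destruct (Nat.eq_dec n (S m)) as [->|Hne]; [lra|].
    eapply Rle_trans; [apply W_step; eassumption|]. apply IH; lia.
Qed.

Lemma E_colour {k} (G : kgraph k) y theta rho (hy : Rplus_functor G y) (ht : 0 < theta)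
  (hr : forall j, (j < k)%nat -> 0 < rho j) i (hi : (i < k)%nat) c (hc : 0 <= c)
  (hb : forall e, deg_eq (kg_d G e) (e_ i) -> Ef G y theta rho e <= c) :
  forall N mu, deg_eq (kg_d G mu) (fun t => if Nat.eqb t i then N else 0%nat) ->
  Ef G y theta rho mu <= c ^ N.
Proof.
  induction N as [|N IH]; intros mu Hmu.
  - unfold Ef. rewrite (rpn_ext rho _ deg_zero).
    + rewrite rpn_zero. pose proof (exp_y_le1 G y theta hy ht mu). simpl. lra.
    + intros t _. rewrite Hmu. unfold deg_zero. destruct (Nat.eqb t i); reflexivity.
  - assert (Hs1 : supported k (e_ i)).
    { intros t Ht. unfold e_. destruct (Nat.eqb_spec t i); lia. }
    assert (Hs2 : supported k (fun t => if Nat.eqb t i then N else 0%nat)).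
    { intros t Ht. destruct (Nat.eqb_spec t i); lia. }
    destruct (kg_fact k G mu (e_ i) _ Hs1 Hs2)
      as [[e mu'] [[Hc [Heq [Hd1 Hd2]]] _]].
    { intros t. rewrite Hmu. unfold deg_add, e_. destruct (Nat.eqb_spec t i); lia. }
    simpl in Hc, Heq, Hd1, Hd2. subst mu.
    rewrite E_comp by assumption. simpl.
    pose proof (E_pos G y theta rho hr e). pose proof (E_pos G y theta rho hr mu').
    apply Rmult_le_compat; [lra|lra|apply hb; exact Hd1|apply IH; exact Hd2].
Qed.

Lemma decay {k} (G : finite_kgraph k) y theta rho xi (hy : Rplus_functor G y) (ht : 0 < theta)
  (hk : (1 <= k)%nat)
  (hr : forall j, (j < k)%nat -> 0 < rho j) (hxi : forall v, 0 < xi v)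
  (hxs : forall v, xi v <= 1)
  (heig : forall j, (j < k)%nat -> forall v, mat_vec G (Bmat G y theta j) xi v = rho j * xi v)
  i (hi : (i < k)%nat) c (hc : 0 <= c)
  (hb : forall e, deg_eq (kg_d G e) (e_ i) -> Ef G y theta rho e <= c)
  x (hx : is_inf_path G x) N :
  Wf G y theta rho xi (prefix G x (N * k)) <= c ^ N.
Proof.
  set (l := prefix G x (N * k)).
  assert (Hdl : kg_d G l i = N).
  { unfold l. replace (N * k)%nat with (N * k + 0)%nat by lia.
    rewrite (prefix_deg G x hx hk N 0) by lia. simpl. lia. }
  assert (Hs1 : supported k (fun t => if Nat.eqb t i then N else 0%nat)).
  { intros t Ht. destruct (Nat.eqb_spec t i); lia. }
  assert (Hs2 : supported k (fun t => if Nat.eqb t i then 0%nat else kg_d G l t)).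
  { intros t Ht. destruct (Nat.eqb_spec t i); [lia|]. apply (kg_d_supp k G l t Ht). }
  destruct (kg_fact k G l _ _ Hs1 Hs2) as [[mu nu] [[Hc [Heq [Hd1 Hd2]]] _]].
  { intros t. unfold deg_add. destruct (Nat.eqb_spec t i) as [->|]; lia. }
  simpl in Hc, Heq, Hd1, Hd2. rewrite Heq.
  unfold Wf. rewrite E_comp by assumption. rewrite kg_s_comp by exact Hc.
  pose proof (E_colour G y theta rho hy ht hr i hi c hc hb N mu Hd1) as H1.
  pose proof (W_le_xi G y theta rho xi hy ht hr hxi heig nu) as H2. unfold Wf in H2.
  pose proof (hxs (kg_r G nu)).
  pose proof (E_pos G y theta rho hr mu). pose proof (E_pos G y theta rho hr nu).
  pose proof (hxi (kg_s G nu)).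
  rewrite Rmult_assoc.
  apply Rle_trans with (c ^ N * 1); [|lra].
  apply Rmult_le_compat; [lra|nra|exact H1|lra].
Qed.

Lemma inf_eq {k} (G : kgraph k) (x z : InfPath G) : proj1_sig x = proj1_sig z -> x = z.
Proof. destruct x as [x hx], z as [z hz]; simpl; intros ->. f_equal. apply proof_irrelevance. Qed.

Lemma first_diff {A} (f g : nat -> A) : forall j, f j <> g j ->
  exists n, (forall i, (i < n)%nat -> f i = g i) /\ f n <> g n.
Proof.
  intros j. induction j as [j IH] using (well_founded_induction lt_wf). intros Hj.
  destruct (classic (forall i, (i < j)%nat -> f i = g i)) as [H|H].
  - exists j; split; assumption.
  - apply not_all_ex_not in H. destruct H as [i Hi].
    apply imply_to_and in Hi. destruct Hi as [Hi1 Hi2]. apply (IH i Hi1 Hi2).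
Qed.

Definition meetP {k} {G : kgraph k} (x z : InfPath G) (n : nat) : Prop :=
  (forall j, (j < n)%nat -> proj1_sig x j = proj1_sig z j) /\ proj1_sig x n <> proj1_sig z n.

Lemma meet_spec {k} (G : kgraph k) (x z : InfPath G) : x <> z -> meetP x z (meet_len x z).
Proof.
  intros Hne. unfold meet_len. apply epsilon_spec.
  destruct (classic (exists j, proj1_sig x j <> proj1_sig z j)) as [[j Hj]|H].
  - apply (first_diff _ _ j Hj).
  - exfalso. apply Hne. apply inf_eq. apply functional_extensionality. intros j.
    apply NNPP. intros C. apply H. exists j. exact C.
Qed.

Lemma meet_unique {k} (G : kgraph k) (x z : InfPath G) n m : meetP x z n -> meetP x z m -> n = m.
Proof.
  intros [H1 H2] [H3 H4]. destruct (lt_eq_lt_dec n m) as [[Hl|He]|Hl]; auto.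
  - exfalso; apply H2, H3, Hl.
  - exfalso; apply H4, H1, Hl.
Qed.

Lemma meet_sym {k} (G : kgraph k) (x z : InfPath G) : x <> z -> meet_len x z = meet_len z x.
Proof.
  intros Hne. apply (meet_unique G x z).
  - apply meet_spec; exact Hne.
  - destruct (meet_spec G z x (fun E => Hne (eq_sym E))) as [H1 H2]. split.
    + intros j Hj. symmetry. apply H1, Hj.
    + intros E. apply H2. symmetry. exact E.
Qed.

Lemma dyt_r {k} (G : kgraph k) y theta rho xi (x z : InfPath G) :
  path_r x <> path_r z -> dyt G y theta rho xi x z = 1.
Proof. intros H. unfold dyt. destruct (excluded_middle_informative _); [contradiction|reflexivity]. Qed.

Lemma dyt_same {k} (G : kgraph k) y theta rho xi (x : InfPath G) : dyt G y theta rho xi x x = 0.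
Proof. unfold dyt. destruct (excluded_middle_informative _) as [_|n]; [|exfalso; apply n; reflexivity].
  destruct (excluded_middle_informative _) as [_|n]; [reflexivity|exfalso; apply n; reflexivity]. Qed.

Lemma dyt_w {k} (G : kgraph k) y theta rho xi (x z : InfPath G) :
  path_r x = path_r z -> x <> z ->
  dyt G y theta rho xi x z = wyt G y theta rho xi (prefix G (proj1_sig x) (meet_len x z)).
Proof. intros H1 H2. unfold dyt. destruct (excluded_middle_informative _); [|contradiction].
  destruct (excluded_middle_informative _); [contradiction|reflexivity]. Qed.

Lemma wyt_pos {k} (G : kgraph k) y theta rho xi l : 0 < wyt G y theta rho xi l.
Proof. unfold wyt. apply Rmult_lt_0_compat; [apply exp_pos|apply Rpower_pos]. Qed.

Lemma meet_prefix {k} (G : kgraph k) (x z : InfPath G) n :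
  path_r x = path_r z -> (forall j, (j < n)%nat -> proj1_sig x j = proj1_sig z j) ->
  prefix G (proj1_sig x) n = prefix G (proj1_sig z) n.
Proof. intros Hr H. apply prefix_ext; [exact H|exact Hr]. Qed.

Lemma fold_max_ge {A} (f : A -> nat) l a : In a l -> (f a <= fold_right Nat.max 0 (map f l))%nat.
Proof. induction l as [|b l IH]; simpl; intros H; [destruct H|]. destruct H as [->|H]; [lia|].
  specialize (IH H). lia. Qed.

Lemma Rfold_max_ge (l : list R) a : In a l -> a <= fold_right Rmax 0 l.
Proof. induction l as [|b l IH]; simpl; intros H; [destruct H|]. destruct H as [->|H].
  - apply Rmax_l.
  - eapply Rle_trans; [apply IH, H|apply Rmax_r]. Qed.

Lemma Rfold_max_lt (l : list R) a : 0 < a -> (forall b, In b l -> b < a) -> fold_right Rmax 0 l < a.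
Proof. induction l as [|b l IH]; simpl; intros H0 H; [exact H0|].
  apply Rmax_lub_lt; [apply H; left; reflexivity|apply IH; [exact H0|intros; apply H; right; assumption]]. Qed.

Lemma Rfold_max_nonneg (l : list R) : 0 <= fold_right Rmax 0 l.
Proof. induction l as [|b l IH]; simpl; [lra|]. eapply Rle_trans; [exact IH|apply Rmax_r]. Qed.

Lemma rho_pos_path {k} (G : finite_kgraph k) y theta rho xi (hxi : forall v, 0 < xi v)
  (heig : forall j, (j < k)%nat -> forall v, mat_vec G (Bmat G y theta j) xi v = rho j * xi v)
  (x : InfPath G) : forall j, (j < k)%nat -> 0 < rho j.
Proof.
  intros j Hj. destruct x as [x hx].
  apply (rho_pos_edge G y theta rho xi hxi j (heig j Hj) (x j)).
  destruct (hx j) as [H _]. rewrite Nat.mod_small in H by exact Hj. exact H.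
Qed.

Lemma colour_exists {k} (G : finite_kgraph k) y theta rho (hy : Rplus_functor G y) (ht : 0 < theta)
  (hk : (1 <= k)%nat) (hr : forall j, (j < k)%nat -> 0 < rho j)
  (hcond : if Nat.eqb (num_vertices G) 1
           then (forall i, (i < k)%nat -> 1 < rho i)
           else (exists i, (i < k)%nat /\
                  forall v w, Bmat G y theta i v w < rho i)) :
  exists i c, (i < k)%nat /\ 0 <= c < 1 /\
    forall e, deg_eq (kg_d G e) (e_ i) -> Ef G y theta rho e <= c.
Proof.
  destruct (Nat.eqb (num_vertices G) 1).
  - exists 0%nat, (/ rho 0%nat). assert (H1 : 1 < rho 0%nat) by (apply hcond; lia).
    split; [lia|]. split.
    + split; [left; apply Rinv_0_lt_compat; lra|]. rewrite <- Rinv_1. apply Rinv_lt_contravar; lra.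
    + intros e He. unfold Ef. rewrite (rpn_ext rho _ (e_ 0)) by (intros; apply He).
      rewrite rpn_e by (lia || lra). pose proof (exp_y_le1 G y theta hy ht e).
      pose proof (Rinv_0_lt_compat (rho 0%nat) ltac:(lra)). nra.
  - destruct hcond as [i [Hi HB]].
    set (Mx := fold_right Rmax 0 (map (fun e => Bmat G y theta i (kg_r G e) (kg_s G e)) (fkg_enum G (e_ i)))).
    pose proof (hr i Hi) as Hri.
    assert (HM : Mx < rho i).
    { apply Rfold_max_lt; [exact Hri|]. intros b Hb. apply in_map_iff in Hb.
      destruct Hb as [e [<- _]]. apply HB. }
    assert (HM0 : 0 <= Mx) by apply Rfold_max_nonneg.
    exists i, (Mx / rho i). split; [exact Hi|]. split.
    + split; [unfold Rdiv; apply Rmult_le_pos; [lra|left; apply Rinv_0_lt_compat; lra]|]. apply Rmult_lt_reg_r with (rho i); [lra|].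
      unfold Rdiv. rewrite Rmult_assoc, Rinv_l by lra. lra.
    + intros e He. unfold Ef. rewrite (rpn_ext rho _ (e_ i)) by (intros; apply He).
      rewrite rpn_e by (lia || lra).
      assert (Hb : exp (- theta * y e) <= Mx).
      { eapply Rle_trans; [apply (edge_B G y theta i e He)|].
        apply Rfold_max_ge. apply in_map_iff. exists e. split; [reflexivity|].
        apply fkg_enum_spec. exact He. }
      unfold Rdiv. apply Rmult_le_compat_r; [left; apply Rinv_0_lt_compat; lra|exact Hb].
Qed.

Theorem proposition6p9 (k : nat) (hk : (1 <= k)%nat) (G : finite_kgraph k)
  (hsc : strongly_connected G)
  (y : kg_mor G -> R) (hy : Rplus_functor G y)
  (theta : R) (htheta : 0 < theta)
  (rho : nat -> R)
  (hrho : forall i, (i < k)%nat -> is_spectral_radius G (Bmat G y theta i) (rho i))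
  (xi : kg_obj G -> R)
  (hxi_pos : forall v, 0 < xi v)
  (hxi_sum : lsum xi (verts G) = 1)
  (hxi_eig : forall i, (i < k)%nat ->
     forall v, mat_vec G (Bmat G y theta i) xi v = rho i * xi v)
  (hcond : if Nat.eqb (num_vertices G) 1
           then (forall i, (i < k)%nat -> 1 < rho i)
           else (exists i, (i < k)%nat /\
                  forall v w, Bmat G y theta i v w < rho i)) :
  is_ultrametric (dyt G y theta rho xi) /\
  (forall U : InfPath G -> Prop,
     metric_open (dyt G y theta rho xi) U <-> cylinder_open U).
Proof.
  set (d := dyt G y theta rho xi).
  assert (Hsame : forall x, d x x = 0) by (intros; apply dyt_same).
  assert (Hr1 : forall x z, path_r x <> path_r z -> d x z = 1) by (intros; apply dyt_r; assumption).
  assert (Hw : forall x z, path_r x = path_r z -> x <> z ->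
     d x z = wyt G y theta rho xi (prefix G (proj1_sig x) (meet_len x z))) by (intros; apply dyt_w; assumption).
  pose proof (xi_le1 G xi hxi_pos hxi_sum) as hxs.
  assert (Hw1 : forall (hr : forall j, (j < k)%nat -> 0 < rho j) l, wyt G y theta rho xi l <= 1).
  { intros hr l. rewrite wyt_W by assumption.
    pose proof (W_le_xi G y theta rho xi hy htheta hr hxi_pos hxi_eig l).
    pose proof (hxs (kg_r G l)).
    assert (0 < Wf G y theta rho xi l) by (unfold Wf; apply Rmult_lt_0_compat; [apply E_pos, hr|apply hxi_pos]).
    assert (E1 : Rpower 1 (/ theta) = 1) by (unfold Rpower; rewrite ln_1, Rmult_0_r; apply exp_0).
    rewrite <- E1.
    apply Rle_Rpower_l; [left; apply Rinv_0_lt_compat; exact htheta|lra]. }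
  assert (Hmono : forall (hr : forall j, (j < k)%nat -> 0 < rho j) x (hx : is_inf_path G x) n m,
     (n <= m)%nat -> wyt G y theta rho xi (prefix G x m) <= wyt G y theta rho xi (prefix G x n)).
  { intros hr x hx n m Hnm. rewrite !wyt_W by assumption.
    pose proof (W_mono G y theta rho xi hy htheta hr hxi_pos hxi_eig x hx n m Hnm).
    assert (0 < Wf G y theta rho xi (prefix G x m)) by (unfold Wf; apply Rmult_lt_0_compat; [apply E_pos, hr|apply hxi_pos]).
    apply Rle_Rpower_l; [left; apply Rinv_0_lt_compat; exact htheta|lra]. }
  assert (Hnn : forall x z, 0 <= d x z).
  { intros x z. unfold d, dyt. destruct (excluded_middle_informative _); [|lra].
    destruct (excluded_middle_informative _); [lra|left; apply wyt_pos]. }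
  split.
  - split; [exact Hnn|]. split; [|split].
    + intros x z. split.
      * intros H. destruct (classic (x = z)) as [E|E]; [exact E|exfalso].
        destruct (classic (path_r x = path_r z)) as [R1|R1].
        -- rewrite Hw in H by assumption. pose proof (wyt_pos G y theta rho xi (prefix G (proj1_sig x) (meet_len x z))). lra.
        -- rewrite Hr1 in H by assumption. lra.
      * intros ->. apply dyt_same.
    + intros x z.
      destruct (classic (path_r x = path_r z)) as [R1|R1].
      * destruct (classic (x = z)) as [->|E]; [reflexivity|].
        rewrite !Hw by auto. rewrite (meet_sym G z x) by auto.
        f_equal. apply meet_prefix; [exact R1|]. apply (meet_spec G x z E).
      * rewrite !Hr1 by auto. reflexivity.
    + intros x z u. pose proof (rho_pos_path G y theta rho xi hxi_pos hxi_eig x) as hr.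
      pose proof (Hnn x u). pose proof (Hnn u z).
      pose proof (Rmax_l (d x u) (d u z)). pose proof (Rmax_r (d x u) (d u z)).
      destruct (classic (path_r x = path_r z)) as [Rxz|Rxz].
      * destruct (classic (x = z)) as [->|Exz]; [rewrite Hsame; lra|].
        destruct (classic (path_r x = path_r u)) as [Rxu|Rxu].
        2:{ assert (d x u = 1) by (apply Hr1; exact Rxu).
            assert (d x z <= 1) by (rewrite Hw by assumption; apply Hw1, hr). lra. }
        assert (Ruz : path_r u = path_r z) by congruence.
        destruct (classic (x = u)) as [<-|Exu]; [rewrite Hsame in *; lra|].
        destruct (classic (u = z)) as [<-|Euz]; [rewrite Hsame in *; lra|].
        destruct (meet_spec G x u Exu) as [Hxu1 Hxu2].
        destruct (meet_spec G u z Euz) as [Huz1 Huz2].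
        destruct (meet_spec G x z Exz) as [Hxz1 Hxz2].
        set (a := meet_len x u) in *. set (b := meet_len u z) in *. set (m := meet_len x z) in *.
        destruct (le_lt_dec a b) as [Hab|Hab].
        -- assert (Ham : (a <= m)%nat).
           { destruct (le_lt_dec a m) as [|Hl]; [assumption|]. exfalso. apply Hxz2.
             rewrite (Hxu1 m Hl). apply Huz1. lia. }
           assert (d x z <= d x u).
           { rewrite !Hw by assumption. fold a b m. apply (Hmono hr _ (proj2_sig x)); exact Ham. }
           lra.
        -- assert (Hbm : (b <= m)%nat).
           { destruct (le_lt_dec b m) as [|Hl]; [assumption|]. exfalso. apply Hxz2.
             rewrite (Hxu1 m ltac:(lia)). apply Huz1. lia. }
           assert (d x z <= d u z).
           { rewrite !Hw by assumption. fold a b m.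
             rewrite <- (meet_prefix G x u b Rxu) by (intros j Hj; apply Hxu1; lia).
             apply (Hmono hr _ (proj2_sig x)); exact Hbm. }
           lra.
      * assert (d x z = 1) by (apply Hr1; exact Rxz).
        destruct (classic (path_r x = path_r u)) as [Rxu|Rxu].
        -- assert (d u z = 1) by (apply Hr1; congruence). lra.
        -- assert (d x u = 1) by (apply Hr1; exact Rxu). lra.
  - intros U. split.
    + intros hU x Ux. pose proof (rho_pos_path G y theta rho xi hxi_pos hxi_eig x) as hr.
      destruct (colour_exists G y theta rho hy htheta hk hr hcond) as [i [c [Hi [Hc Hb]]]].
      destruct (hU x Ux) as [eps [Heps Hball]].
      pose proof (Rpower_pos eps theta) as Hpe.
      destruct (pow_lt_1_zero c ltac:(rewrite Rabs_pos_eq; lra) (Rpower eps theta) Hpe) as [N HN].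
      specialize (HN N (le_n N)). rewrite Rabs_pos_eq in HN by (apply pow_le; lra).
      destruct x as [x hx].
      exists [ (path_r (exist _ x hx), map x (seq 0 (N * k))) ].
      split.
      * constructor; [|constructor]. split.
        -- split; [|split].
           ++ intros j f Hf. cbn [snd fst] in Hf. rewrite nth_error_map, nth_error_seq in Hf.
              destruct (Nat.ltb j (N * k)); [|discriminate]. simpl in Hf. injection Hf as <-.
              apply (proj1 (hx j)).
           ++ intros f Hf. cbn [snd fst] in Hf. rewrite nth_error_map, nth_error_seq in Hf.
              destruct (Nat.ltb 0 (N * k)); [|discriminate]. simpl in Hf. injection Hf as <-.
              reflexivity.
           ++ intros j f g Hf Hg. cbn [snd fst] in Hf, Hg. rewrite nth_error_map, nth_error_seq in Hf, Hg.
              destruct (Nat.ltb j (N * k)); [|discriminate].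
              destruct (Nat.ltb (S j) (N * k)); [|discriminate].
              simpl in Hf, Hg. injection Hf as <-. injection Hg as <-. apply (proj2 (hx j)).
        -- split; [reflexivity|]. intros j Hj. simpl in Hj |- *. rewrite length_map, length_seq in Hj.
           rewrite nth_error_map, nth_error_seq. destruct (Nat.ltb_spec j (N * k)); [reflexivity|lia].
      * intros z Hz. inversion Hz as [|? ? [Hz1 Hz2] _]. subst. simpl in Hz1.
        apply Hball. set (xx := exist _ x hx : InfPath G) in *.
        assert (Hagree : forall j, (j < N * k)%nat -> proj1_sig xx j = proj1_sig z j).
        { intros j Hj. specialize (Hz2 j). simpl in Hz2. rewrite length_map, length_seq in Hz2.
          specialize (Hz2 Hj). rewrite nth_error_map, nth_error_seq in Hz2.
          destruct (Nat.ltb_spec j (N * k)); [|lia]. simpl in Hz2. injection Hz2. auto. }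
        destruct (classic (xx = z)) as [<-|Exz]; [rewrite Hsame; lra|].
        destruct (meet_spec G xx z Exz) as [Hm1 Hm2].
        assert (Hm : (N * k <= meet_len xx z)%nat).
        { destruct (le_lt_dec (N * k) (meet_len xx z)) as [|Hl]; [assumption|].
          exfalso; apply Hm2, Hagree, Hl. }
        rewrite Hw by (auto; symmetry; exact Hz1).
        eapply Rle_lt_trans; [apply (Hmono hr x hx _ _ Hm)|].
        rewrite wyt_W by assumption.
        pose proof (decay G y theta rho xi hy htheta hk hr hxi_pos hxs hxi_eig i Hi c (proj1 Hc) Hb x hx N) as HD.
        assert (0 < Wf G y theta rho xi (prefix G x (N * k))) by (unfold Wf; apply Rmult_lt_0_compat; [apply E_pos, hr|apply hxi_pos]).
        assert (E1 : Rpower (Rpower eps theta) (/ theta) = eps).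
        { rewrite Rpower_mult. rewrite Rinv_r by lra. apply Rpower_1; exact Heps. }
        rewrite <- E1 at 1.
        apply Rlt_Rpower_l; [apply Rinv_0_lt_compat; exact htheta|lra].
    + intros hU x Ux. pose proof (rho_pos_path G y theta rho xi hxi_pos hxi_eig x) as hr.
      destruct (hU x Ux) as [ps [Hps HpsU]].
      set (L := fold_right Nat.max 0%nat (map (fun p : FinPath G => length (snd p)) ps)).
      set (w0 := wyt G y theta rho xi (prefix G (proj1_sig x) L)).
      exists (Rmin 1 w0). split.
      { apply Rmin_pos; [lra|apply wyt_pos]. }
      intros z Hdz. apply HpsU.
      pose proof (Rmin_l 1 w0). pose proof (Rmin_r 1 w0).
      destruct (classic (path_r x = path_r z)) as [Rxz|Rxz].
      2:{ exfalso. assert (d x z = 1) by (apply Hr1; exact Rxz). lra. }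
      destruct (classic (x = z)) as [<-|Exz].
      { eapply Forall_impl; [|exact Hps]. intros p [_ Hp]. exact Hp. }
      destruct (meet_spec G x z Exz) as [Hm1 Hm2].
      assert (HL : (L < meet_len x z)%nat).
      { destruct (le_lt_dec (meet_len x z) L) as [Hl|Hl]; [exfalso|exact Hl].
        pose proof (Hmono hr _ (proj2_sig x) _ _ Hl).
        rewrite Hw in Hdz by assumption. fold w0 in H1. lra. }
      apply Forall_forall. intros p Hp. rewrite Forall_forall in Hps.
      destruct (Hps p Hp) as [_ [Hp1 Hp2]]. split; [congruence|].
      intros j Hj. rewrite (Hp2 j Hj). f_equal. apply Hm1.
      pose proof (fold_max_ge (fun p : FinPath G => length (snd p)) ps p Hp). fold L in H1. lia.
Qed.
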